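(* Fix positive integers $r,n,k$ and consider $\mathbb{C}^{rn}$ with a fixed basis indexed by $[r]\times[n]$. Let the torus $T=(\mathbb{C}^* )^n$ act on $\mathbb{C}^{rn}$ by letting $\mathbf{t}=(t_1,\dots,t_n)$ multiply the $(i,j)$-th coordinate by $t_j$, and consider the induced action on the Grassmannian $G(k,rn)$ of $k$-dimensional subspaces of $\mathbb{C}^{rn}$, embedded in $\mathbb{P}(\bigwedge^k\mathbb{C}^{rn})$ by the Plücker embedding. Let $p\in G(k,rn)$ and let $\mathcal{M}$ be the polymatroid associated with $p$. Then the lattice polytope representing the projective toric variety $\overline{Tp}$ is isomorphic to the base polytope of $\mathcal{M}$.
   Context: A polymatroid on a finite set $E$ is given by a rank function $r:\mathcal{P}(E)\to\mathbb{Z}_{\ge0}$ with $r(\emptyset)=0$, $r$ monotone ($Y\subseteq X\Rightarrow r(Y)\le r(X)$) and submodular ($r(X\cup Y)+r(X\cap Y)\le r(X)+r(Y)$). Its base polytope is $\{x\in\mathbb{R}_{\ge0}^E: x\cdot\mathbf{e}_U\le r(U)\ \forall U\subseteq E,\ x\cdot\mathbf{e}_E=r(E)\}$, where $\mathbf{e}_U$ is the indicator vector of $U$. The polymatroid associated with $p$: represent $p$ by a full-rank $k\times rn$ matrix $A$ whose rows span the subspace $p$; for $j\in[n]$ let $W_j\subseteq\mathbb{C}^k$ be the span of the $r$ columns of $A$ indexed by $(i,j)$, $i\in[r]$; then $\mathcal{M}$ is the polymatroid on $[n]$ with rank function $r(S)=\dim\sum_{j\in S}W_j$ (independent of the choice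 of $A$). The lattice polytope representing a projective toric variety given as the closure of a torus orbit parameterised by monomials is the convex hull of the exponent vectors of those monomials. *)

(* Defs.v *)
From HB Require Import structures.
From mathcomp Require Import all_boot all_order all_algebra.
From mathcomp Require Import reals.
From mathcomp Require Import complex.
Set Implicit Arguments. Unset Strict Implicit. Unset Printing Implicit Defensive.
Import Order.TTheory GRing.Theory Num.Theory.
Local Open Scope ring_scope.

(* Index set [r] x [n] of the fixed basis of C^{rn}; columns of a matrix
   representing p are indexed by 'I_(cellN r n), and column c corresponds to
   the basis vector cell c = (i, j). *)
Definition cellN (r n : nat) : nat := #|{: 'I_r * 'I_n}|.
Definition cell {r n : nat} (c : 'I_(cellN r n)) : 'I_r * 'I_n := enum_val c.
Definition cell_idx {r n : nat} (ij : 'I_r * 'I_n) : 'I_(cellN r n) := enum_rank ij.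

Section Defs.
Variables (C : fieldType) (r n k : nat).
Local Notation N := (cellN r n).

(* Torus action: t multiplies the (i,j)-th coordinate by t_j.  A subspace p is
   the row space of A; t.p is the row space of A *m diag(t). *)
Definition torus_act (t : 'I_n -> C) (A : 'M[C]_(k, N)) : 'M[C]_(k, N) :=
  A *m diag_mx (\row_c t (cell c).2).

Definition pl_index (f : 'I_k -> 'I_N) : Prop := forall a b : 'I_k, (a < b)%N -> (f a < f b)%N.
Definition plucker (A : 'M[C]_(k, N)) (f : 'I_k -> 'I_N) : C := \det (colsub f A).

Definition orbit_exponents (A : 'M[C]_(k, N)) (e : 'I_n -> nat) : Prop :=
  exists f, pl_index f /\ exists c : C, c != 0 /\
    forall t : 'I_n -> C, (forall j, t j != 0) ->
      plucker (torus_act t A) f = c * \prod_(j < n) t j ^+ e j.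

(* W_j : the span of the r columns indexed by (i,j), i in [r], represented
   (mxalgebra style) by the r x k matrix whose rows are these columns. *)
Definition Wspace (A : 'M[C]_(k, N)) (j : 'I_n) : 'M[C]_(r, k) :=
  (colsub (fun i : 'I_r => cell_idx (i, j)) A)^T.

Definition polyrank (A : 'M[C]_(k, N)) (S : {set 'I_n}) : nat :=
  \rank (\sum_(j in S) <<Wspace A j>>)%MS.
End Defs.

Section Polytopes.
Variables (R : realFieldType) (n : nat).

Definition conv (X : 'rV[R]_n -> Prop) (x : 'rV[R]_n) : Prop :=
  exists (m : nat) (v : 'I_m -> 'rV[R]_n) (l : 'I_m -> R),
    (forall i, X (v i)) /\ (forall i, 0 <= l i) /\ \sum_i l i = 1 /\
    x = \sum_i l i *: v i.

Definition base_polytope (rk : {set 'I_n} -> nat) (x : 'rV[R]_n) : Prop :=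
  (forall j, 0 <= x 0 j) /\
  (forall U : {set 'I_n}, \sum_(j in U) x 0 j <= (rk U)%:R) /\
  \sum_(j < n) x 0 j = (rk setT)%:R.

Definition lattice_iso (P Q : 'rV[R]_n -> Prop) : Prop :=
  exists (M : 'M[int]_n) (b : 'rV[int]_n), M \in unitmx /\
    forall y, Q y <-> exists x, P x /\ y = x *m map_mx intr M + map_mx intr b.
End Polytopes.

(* The lattice polytope of the projective toric variety closure(T p):
   convex hull of the exponent vectors of the parameterizing monomials. *)
Definition toric_polytope (R : realFieldType) (C : fieldType) (r n k : nat)
  (A : 'M[C]_(k, cellN r n)) : 'rV[R]_n -> Prop :=
  conv (fun x => exists e, orbit_exponents A e /\ x = \row_j (e j)%:R).
Arguments toric_polytope R {C r n k} A _.
Arguments base_polytope R {n} rk x.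

(* Main.v *)
Require Import Defs.
From HB Require Import structures.
From mathcomp Require Import all_boot all_order all_algebra.
From mathcomp Require Import reals.
From mathcomp Require Import complex.
From mathcomp Require Import zify ring lra.
From Stdlib Require Import Classical.
Set Implicit Arguments. Unset Strict Implicit. Unset Printing Implicit Defensive.
Import Order.TTheory GRing.Theory Num.Theory.
Local Open Scope ring_scope.
Section Poly.
Variables (R : realFieldType) (n : nat) (rk : {set 'I_n} -> nat).
Hypothesis rk0 : rk set0 = 0%N.
Hypothesis rksub : forall U V, (rk (U :|: V) + rk (U :&: V) <= rk U + rk V)%N.

Definition xs (x : 'rV[R]_n) (U : {set 'I_n}) := \sum_(j in U) x 0 j.
Definition tight (x : 'rV[R]_n) U := xs x U == (rk U)%:R.
Definition inB (x : 'rV[R]_n) := base_polytope R rk x.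

Lemma xsE (x : 'rV[R]_n) U : xs x U = \sum_j (j \in U)%:R * x 0 j.
Proof. by rewrite /xs big_mkcond /=; apply: eq_bigr => j _; case: (j \in U); rewrite ?mul1r ?mul0r. Qed.

Lemma xsUI (x : 'rV[R]_n) U V : xs x (U :|: V) + xs x (U :&: V) = xs x U + xs x V.
Proof.
rewrite !xsE -!big_split /=; apply: eq_bigr => j _.
by rewrite in_setU in_setI; case: (j \in U); case: (j \in V); rewrite /= ?mul1r ?mul0r ?addr0 ?add0r.
Qed.

Lemma xsT (x : 'rV[R]_n) : \sum_(j < n) x 0 j = xs x setT.
Proof. by rewrite /xs; apply: eq_bigl => j; rewrite in_setT. Qed.

Lemma tightUI (x : 'rV[R]_n) U V : inB x -> tight x U -> tight x V -> tight x (U :|: V) && tight x (U :&: V).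
Proof.
case=> _ [hle _] /eqP hU /eqP hV.
have h1 : xs x (U :|: V) <= (rk (U :|: V))%:R := hle _.
have h2 : xs x (U :&: V) <= (rk (U :&: V))%:R := hle _.
have e := xsUI x U V.
have hs : (rk (U :|: V))%:R + (rk (U :&: V))%:R <= (rk U)%:R + (rk V)%:R :> R.
  by rewrite -!natrD ler_nat.
by apply/andP; split; apply/eqP; lra.
Qed.

Lemma tight_bigcup (x : 'rV[R]_n) (P : pred {set 'I_n}) : inB x -> (forall U, P U -> tight x U) ->
  tight x (\bigcup_(U | P U) U).
Proof.
move=> hx hP; apply: (big_ind (tight x)) => //.
- by rewrite /tight /xs big_set0 rk0.
- by move=> U V hU hV; case/andP: (tightUI hx hU hV).
Qed.

Lemma tight_bigcap (x : 'rV[R]_n) (P : pred {set 'I_n}) : inB x -> (forall U, P U -> tight x U) ->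
  tight x (\bigcap_(U | P U) U).
Proof.
move=> hx hP; apply: (big_ind (tight x)) => //.
- by case: hx => _ [_ hT]; rewrite /tight -xsT hT.
- by move=> U V hU hV; case/andP: (tightUI hx hU hV).
Qed.

Definition vertexc (x : 'rV[R]_n) := forall i j, i != j -> 0 < x 0 i -> 0 < x 0 j ->
  exists U, tight x U /\ (i \in U) != (j \in U).

Lemma sum_ind (U : {set 'I_n}) i : \sum_(l in U) ((l == i)%:R : R) = (i \in U)%:R.
Proof.
rewrite big_mkcond (bigD1 i) //= big1 => [|l /negbTE nli]; last by rewrite nli; case: ifP.
by rewrite eqxx addr0; case: (i \in U).
Qed.

Lemma vertex_int (x : 'rV[R]_n) : inB x -> vertexc x -> forall i, exists m : nat, x 0 i = m%:R.
Proof.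
move=> hx hv i.
have [hi0|hpos] := eqVneq (x 0 i) 0; first by exists 0%N.
have {}hpos : 0 < x 0 i by rewrite lt_def hpos; case: hx => h _; exact: h.
pose T := \bigcap_(U | tight x U && (i \in U)) U.
pose S := \bigcup_(U | tight x U && (U \subset T) && (i \notin U)) U.
have tT : tight x T by apply: tight_bigcap => // U /andP[].
have tS : tight x S by apply: tight_bigcup => // U /andP[/andP[]].
have iT : i \in T by apply/bigcapP => U /andP[].
have iS : i \notin S by apply/bigcupP => -[U /andP[_ h] iU]; rewrite iU in h.
have ST : S \subset T by apply/bigcupsP => U /andP[/andP[_ h] _].
have key : xs x T = xs x S + x 0 i.
  have -> : x 0 i = \sum_j (j == i)%:R * x 0 j.
    by rewrite (bigD1 i) //= eqxx mul1r big1 ?addr0 // => j /negbTE ->; rewrite mul0r.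
  rewrite !xsE -big_split /=; apply: eq_bigr => j _.
  have [->|nji] := eqVneq j i; first by rewrite iT (negbTE iS) ?eqxx /= ?mul0r ?mul1r ?add0r.
  have nij : i != j by rewrite eq_sym.
  case jS: (j \in S); first by rewrite (subsetP ST j jS) /= mul1r mul0r addr0.
  case jT: (j \in T); last by rewrite /= !mul0r addr0.
  rewrite /= mul1r !mul0r addr0.
  have [//|xj0] := eqVneq (x 0 j) 0.
  have xjpos : 0 < x 0 j by rewrite lt_def xj0; case: hx => h _; exact: h.
  have [U [tU]] := hv i j (nij : i != j) hpos xjpos.
  case iU: (i \in U); case jU: (j \in U) => // _.
  - have : T \subset U by rewrite /T; apply: (bigcap_inf U); rewrite tU iU.
    by move/subsetP/(_ j jT); rewrite jU.
  - have tUT : tight x (U :&: T) by case/andP: (tightUI hx tU tT).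
    have : U :&: T \subset S.
      by rewrite /S; apply: (bigcup_sup (U :&: T)); rewrite tUT subsetIr inE iU.
    by move/subsetP/(_ j); rewrite inE jU jT jS => /(_ isT).
have hS : xs x S = (rk S)%:R by apply/eqP.
have hT : xs x T = (rk T)%:R by apply/eqP.
have le : ((rk S)%:R <= (rk T)%:R :> R) by rewrite -hS -hT key lerDl ltW.
rewrite ler_nat in le.
by exists (rk T - rk S)%N; rewrite natrB // -hS -hT key; ring.
Qed.

Definition dv (i j : 'I_n) : 'rV[R]_n := \row_l ((l == i)%:R - (l == j)%:R).

Lemma xs_add (x y : 'rV[R]_n) U : xs (x + y) U = xs x U + xs y U.
Proof. by rewrite /xs -big_split; apply: eq_bigr => l _; rewrite mxE. Qed.

Lemma xs_scale s (x : 'rV[R]_n) U : xs (s *: x) U = s * xs x U.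
Proof. by rewrite /xs mulr_sumr; apply: eq_bigr => l _; rewrite mxE. Qed.

Lemma xs_dv i j U : xs (dv i j) U = (i \in U)%:R - (j \in U)%:R.
Proof.
rewrite /xs (eq_bigr (fun l => (l == i)%:R - (l == j)%:R)) => [|l _]; last by rewrite mxE.
by rewrite sumrB !sum_ind.
Qed.

Definition mu (x : 'rV[R]_n) : nat := addn #|[set U | tight x U]| #|[set l | x 0 l == 0]|.

Lemma mu_bound x : (mu x <= #|{set 'I_n}| + n)%N.
Proof.
rewrite /mu; apply: leq_add; first exact: max_card.
by rewrite -[X in (_ <= X)%N]card_ord max_card.
Qed.

Lemma step (x : 'rV[R]_n) i j : inB x -> i != j -> 0 < x 0 i -> 0 < x 0 j ->
  (forall U, tight x U -> (i \in U) = (j \in U)) ->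
  exists2 s, 0 < s & inB (x + s *: dv i j) /\ (mu x < mu (x + s *: dv i j))%N.
Proof.
move=> hx nij xi xj htU.
pose P := fun U : {set 'I_n} => (i \in U) && (j \notin U).
have P1 : P [set i] by rewrite /P !in_set1 eqxx eq_sym nij.
pose sl := fun U => (rk U)%:R - xs x U.
case: (arg_minP sl P1) => U0 PU0 minU0.
have [h0 [hle hT]] := hx.
have slpos : forall U, P U -> 0 < sl U.
  move=> U /andP[iU jU]; rewrite /sl subr_gt0 lt_def (hle U) andbT.
  apply: contra jU => /eqP h; rewrite -(htU U) //; by rewrite /tight h.
pose s := Num.min (x 0 j) (sl U0).
have s_pos : 0 < s by rewrite lt_min xj slpos.
have s_le_j : s <= x 0 j by rewrite ge_min lexx.
have s_le : forall U, P U -> s <= sl U by move=> U PU; rewrite ge_min (minU0 U PU) orbT.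
exists s => //.
set y := x + s *: dv i j.
have yE : forall l, y 0 l = x 0 l + s * ((l == i)%:R - (l == j)%:R) by move=> l; rewrite !mxE.
have xsy : forall U, xs y U = xs x U + s * ((i \in U)%:R - (j \in U)%:R).
  by move=> U; rewrite xs_add xs_scale xs_dv.
have tty : forall U, tight x U -> tight y U.
  by move=> U tU; move: (tU); rewrite /tight xsy (htU U tU) => /eqP ->; rewrite subrr mulr0 addr0.
have zz : forall l, x 0 l = 0 -> y 0 l = 0.
  move=> l xl; rewrite yE xl.
  have -> : (l == i) = false by apply/eqP => e; move: xi; rewrite -e xl ltxx.
  have -> : (l == j) = false by apply/eqP => e; move: xj; rewrite -e xl ltxx.
  by rewrite subrr mulr0 addr0.
split.
  split; [|split].
  - move=> l; rewrite yE.
    have [->|nli] := eqVneq l i.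
      rewrite ?eqxx ?(negbTE nij) /= subr0 mulr1. by rewrite addr_ge0 // ltW.
    have [->|nlj] := eqVneq l j.
      rewrite ?eqxx ?(negbTE (nij : i != j)) /= sub0r mulrN1. by rewrite subr_ge0.
    by rewrite /= subrr mulr0 addr0.
  - move=> U; change (xs y U <= (rk U)%:R); rewrite xsy.
    case iU: (i \in U); case jU: (j \in U); rewrite /= ?subrr ?mulr0 ?addr0 ?subr0 ?mulr1 ?sub0r ?mulrN1.
    + exact: hle.
    + have := s_le U; rewrite /P iU jU /sl => /(_ isT); lra.
    + have := hle U; change (xs x U <= (rk U)%:R -> xs x U - s <= (rk U)%:R). move: s_pos; lra.
    + exact: hle.
  - by rewrite xsT xsy !in_setT subrr mulr0 addr0 -xsT.
have [hsj|hsl] : s = x 0 j \/ s = sl U0.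
  have [h|h] := leP (x 0 j) (sl U0); [left; exact: min_l | right; apply: min_r; exact: ltW].
- rewrite /mu -addnS; apply: leq_add.
    apply: subset_leq_card; apply/subsetP => U; rewrite !inE; exact: tty.
  apply: proper_card; apply/properP; split.
    apply/subsetP => l; rewrite !inE => /eqP h; apply/eqP; exact: zz.
  exists j; last by rewrite inE; move: xj; rewrite lt_def => /andP[].
  have nji : (j == i) = false by rewrite eq_sym (negbTE nij).
  by rewrite inE yE eqxx nji /= sub0r mulrN1 hsj subrr.
- rewrite /mu -addSn; apply: leq_add; last first.
    apply: subset_leq_card; apply/subsetP => l; rewrite !inE => /eqP h; apply/eqP; exact: zz.
  apply: proper_card; apply/properP; split.
    apply/subsetP => U; rewrite !inE; exact: tty.
  exists U0; last by rewrite inE /tight; move: (slpos U0 PU0); rewrite /sl subr_gt0 lt_def eq_sym => /andP[].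
  case/andP: PU0 => iU jU.
  by rewrite inE /tight xsy iU (negbTE jU) /= subr0 mulr1 hsl /sl; apply/eqP; ring.
Qed.

Lemma conv_comb (X : 'rV[R]_n -> Prop) y1 y2 a b : conv X y1 -> conv X y2 ->
  0 <= a -> 0 <= b -> a + b = 1 -> conv X (a *: y1 + b *: y2).
Proof.
case=> m1 [v1 [l1 [hv1 [hl1 [hs1 ->]]]]] [m2 [v2 [l2 [hv2 [hl2 [hs2 ->]]]]]] ha hb hab.
have sL i : split (lshift m2 i) = inl _ i by exact: (unsplitK (inl _ i)).
have sR i : split (rshift m1 i) = inr _ i by exact: (unsplitK (inr _ i)).
exists (m1 + m2)%N, (fun i => match split i with inl i1 => v1 i1 | inr i2 => v2 i2 end),
  (fun i => match split i with inl i1 => a * l1 i1 | inr i2 => b * l2 i2 end).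
split; [|split; [|split]].
- by move=> i; case: split.
- by move=> i; case: split => k; apply: mulr_ge0.
- rewrite big_split_ord /=.
  rewrite (eq_bigr (fun i => a * l1 i)) => [|i _]; last by rewrite sL.
  rewrite [X in _ + X](eq_bigr (fun i => b * l2 i)) => [|i _]; last by rewrite sR.
  by rewrite -!mulr_sumr hs1 hs2 !mulr1.
- apply: esym; rewrite big_split_ord /=.
  rewrite (eq_bigr (fun i => a *: (l1 i *: v1 i))) => [|i _]; last by rewrite sL scalerA.
  rewrite [X in _ + X](eq_bigr (fun i => b *: (l2 i *: v2 i))) => [|i _]; last by rewrite sR scalerA.
  by rewrite -!scaler_sumr.
Qed.

Lemma conv1 (X : 'rV[R]_n -> Prop) x : X x -> conv X x.
Proof.
move=> hx; exists 1%N, (fun _ => x), (fun _ => 1); split; [by []|split; [by move=> _; exact: ler01|]].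
by rewrite !big_ord1 scale1r.
Qed.

Lemma inB_conv (X : 'rV[R]_n -> Prop) :
  (forall x, inB x -> (forall i, exists m : nat, x 0 i = m%:R) -> X x) ->
  forall x, inB x -> conv X x.
Proof.
move=> hX x hx.
pose Bd := (#|{set 'I_n}| + n)%N.
suff : forall m x, inB x -> (Bd - mu x < m)%N -> conv X x.
  by apply; [exact: hx | exact: ltnSn].
elim=> [//|m IH] {}x {}hx hm.
have [hv|hnv] := classic (vertexc x).
  by apply: conv1; apply: hX => //; exact: vertex_int.
have [i [j [nij [xi [xj htU]]]]] : exists i j, i != j /\ 0 < x 0 i /\ 0 < x 0 j /\
    (forall U, tight x U -> (i \in U) = (j \in U)).
  apply: NNPP => H; apply: hnv => i j nij xi xj.
  apply: NNPP => H2; apply: H; exists i, j; do 3 (split => //).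
  move=> U tU; apply/eqP; apply: NNPP => H3; apply: H2; exists U; split => //.
  by apply/negP.
have [s1 s1p [hy1 my1]] := step hx nij xi xj htU.
have nji : j != i by rewrite eq_sym.
have [s2 s2p [hy2 my2]] := step hx nji xj xi (fun U tU => esym (htU U tU)).
have b1 := mu_bound (x + s1 *: dv i j).
have b2 := mu_bound (x + s2 *: dv j i).
have c1 := IH _ hy1 (ltac:(rewrite /Bd in hm *; lia)).
have c2 := IH _ hy2 (ltac:(rewrite /Bd in hm *; lia)).
have hs : s1 + s2 != 0 by rewrite lt0r_neq0 // addr_gt0.
have -> : x = (s2 / (s1 + s2)) *: (x + s1 *: dv i j) + (s1 / (s1 + s2)) *: (x + s2 *: dv j i).
  apply/rowP => l; rewrite !mxE; field; exact: hs.
apply: conv_comb => //; try by apply: divr_ge0; apply: ltW => //; rewrite addr_gt0.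
by field.
Qed.

Lemma xs_comb m (l : 'I_m -> R) (v : 'I_m -> 'rV[R]_n) U :
  xs (\sum_i l i *: v i) U = \sum_i l i * xs (v i) U.
Proof.
rewrite /xs (eq_bigr (fun j => \sum_i l i * v i 0 j)) => [|j _]; last first.
  by rewrite summxE; apply: eq_bigr => i _; rewrite mxE.
by rewrite exchange_big; apply: eq_bigr => i _; rewrite mulr_sumr.
Qed.

Lemma conv_inB (X : 'rV[R]_n -> Prop) : (forall v, X v -> inB v) -> forall x, conv X x -> inB x.
Proof.
move=> hX x [m [v [l [hv [hl [hs ->]]]]]].
split; [|split].
- move=> j; rewrite summxE; apply: sumr_ge0 => i _; rewrite mxE; apply: mulr_ge0 => //.
  by case: (hX _ (hv i)) => h _; exact: h.
- move=> U; change (xs (\sum_i l i *: v i) U <= (rk U)%:R); rewrite xs_comb.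
  apply: le_trans (_ : \sum_i l i * (rk U)%:R <= _).
    apply: ler_sum => i _; apply: ler_wpM2l => //.
    by case: (hX _ (hv i)) => _ [h _]; exact: h.
  by rewrite -mulr_suml hs mul1r.
- rewrite xsT xs_comb (eq_bigr (fun i => l i * (rk setT)%:R)) => [|i _].
    by rewrite -mulr_suml hs mul1r.
  by case: (hX _ (hv i)) => _ [_ h]; rewrite -xsT h.
Qed.

End Poly.
Section Rado.
Variables (T : finType) (n : nat) (g : T -> 'I_n) (rho : {set T} -> nat).
Hypothesis rho0 : rho set0 = 0%N.
Hypothesis rho_mono : forall A B : {set T}, A \subset B -> (rho A <= rho B)%N.
Hypothesis rho_sub : forall A B : {set T}, (rho (A :|: B) + rho (A :&: B) <= rho A + rho B)%N.
Hypothesis rho_inc : forall c (A : {set T}), (rho (c |: A) <= (rho A).+1)%N.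

Local Open Scope nat_scope.

Definition G (U : {set 'I_n}) := [set c | g c \in U].
Definition cnt (S : {set T}) l := \sum_(d in S) (g d == l).

Lemma sumUI (F : 'I_n -> nat) (U V : {set 'I_n}) : \sum_(l in U :|: V) F l + \sum_(l in U :&: V) F l =
   \sum_(l in U) F l + \sum_(l in V) F l.
Proof.
rewrite !(big_mkcond (fun l => l \in _)) -!big_split /=; apply: eq_bigr => l _.
by rewrite in_setU in_setI; case: (l \in U); case: (l \in V); rewrite /= ?addn0.
Qed.

Lemma sum_indn (U : {set 'I_n}) j : \sum_(l in U) (l == j) = (j \in U).
Proof.
rewrite big_mkcond (bigD1 j) //= big1 => [|l /negbTE nlj]; last by rewrite nlj; case: ifP.
by rewrite eqxx addn0; case: (j \in U).
Qed.

Lemma sum_eq1 (j : 'I_n) : \sum_l (l == j) = 1.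
Proof.
rewrite (bigD1 j) //= big1 => [|l /negbTE ->] //; by rewrite eqxx.
Qed.

Lemma card_cnt (S : {set T}) : #|S| = \sum_l cnt S l.
Proof.
rewrite /cnt exchange_big /= -sum1_card; apply: eq_bigr => d _.
rewrite (bigD1 (g d)) //= eqxx big1 // => l; rewrite eq_sym => /negbTE ->; done.
Qed.

Lemma closure (X : {set T}) (s : seq T) : (forall c, c \in s -> rho (c |: X) <= rho X) ->
  rho (X :|: [set c in s]) <= rho X.
Proof.
elim: s => [|a s IH] h.
  have -> : X :|: [set c in [::]] = X by apply/setP => c; rewrite !inE orbF.
  by [].
have IH' : rho (X :|: [set c in s]) <= rho X.
  by apply: IH => c cs; apply: h; rewrite inE cs orbT.
set X' := X :|: [set c in s] in IH'.
have ha := h a (mem_head a s).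
have e1 : X :|: [set c in a :: s] = a |: X'.
  by apply/setP => c; rewrite !inE; case: (c == a); case: (c \in X); case: (c \in s).
have e2 : (a |: X) :|: X' = a |: X'.
  by apply/setP => c; rewrite !inE; case: (c == a); case: (c \in X); case: (c \in s).
have s3 : X \subset (a |: X) :&: X'.
  by apply/subsetP => c; rewrite !inE => ->; rewrite orbT.
have := rho_sub (a |: X) X'; rewrite e2 e1.
have := rho_mono s3; have := rho_mono (subsetUl X [set c in s]); rewrite -/X'.
lia.
Qed.

Lemma union_le (X : {set T}) (s : seq T) : rho (X :|: [set c in s]) <= rho X + size s.
Proof.
elim: s => [|a s IH].
  have -> : X :|: [set c in [::]] = X by apply/setP => c; rewrite !inE orbF.
  by rewrite addn0.
have e1 : X :|: [set c in a :: s] = a |: (X :|: [set c in s]).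
  by apply/setP => c; rewrite !inE; case: (c == a); case: (c \in X); case: (c \in s).
by rewrite e1; apply: leq_trans (rho_inc _ _) _; rewrite /= addnS ltnS.
Qed.

Lemma union_le_set (X Y : {set T}) : rho (X :|: Y) <= rho X + #|Y|.
Proof. by have := union_le X (enum Y); rewrite set_enum cardE. Qed.

Lemma rado_gen m : forall (S : {set T}) (y : 'I_n -> nat), \sum_l y l = m -> rho S = #|S| ->
  (forall U : {set 'I_n}, \sum_(l in U) y l + #|S| <= rho (S :|: G U)) ->
  exists S' : {set T}, [/\ S \subset S', rho S' = #|S'| & forall l, cnt S' l = cnt S l + y l].
Proof.
elim: m => [|m IH] S y hsum hS hC.
  exists S; split => // l.
  rewrite (bigD1 l) //= in hsum; lia.
have [j yj] : exists j, 0 < y j.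
  apply: NNPP => H; move: hsum; rewrite big1 // => l _.
  by apply/eqP; rewrite -leqn0 leqNgt; apply/negP => hl; apply: H; exists l.
pose tightR (U : {set 'I_n}) := \sum_(l in U) y l + #|S| == rho (S :|: G U).
have tU : forall U V : {set 'I_n}, tightR U -> tightR V -> tightR (U :|: V).
  move=> U V /eqnP hU /eqnP hV; apply/eqnP.
  have e1 : (S :|: G U) :|: (S :|: G V) = S :|: G (U :|: V).
    by apply/setP => c; rewrite !inE; case: (c \in S); case: (g c \in U); case: (g c \in V).
  have e2 : (S :|: G U) :&: (S :|: G V) = S :|: G (U :&: V).
    by apply/setP => c; rewrite !inE; case: (c \in S); case: (g c \in U); case: (g c \in V).
  have := rho_sub (S :|: G U) (S :|: G V); rewrite e1 e2.
  have := hC (U :|: V); have := hC (U :&: V); have := sumUI y U V.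
  lia.
pose TT := \bigcup_(U : {set 'I_n} | (j \notin U) && tightR U) U.
have hTT : (j \notin TT) && tightR TT.
  rewrite /TT; apply: (big_ind (fun U : {set 'I_n} => (j \notin U) && tightR U)) => //.
  - rewrite inE /tightR big_set0 add0n; apply/eqnP.
    suff -> : S :|: G set0 = S by [].
    by apply/setP => c; rewrite !inE orbF.
  - move=> U V /andP[jU hU] /andP[jV hV]; rewrite inE negb_or jU jV /=; exact: tU.
case/andP: hTT => jT tT.
set X := S :|: G TT.
have [c gc hc] : exists2 c, g c == j & rho (c |: X) = (rho X).+1.
  apply: NNPP => H.
  have hle : forall c, c \in enum (G [set j]) -> rho (c |: X) <= rho X.
    move=> c; rewrite mem_enum inE in_set1 => gc.
    have := rho_inc c X; have := rho_mono (subsetUr [set c] X).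
    case: (ltngtP (rho (c |: X)) (rho X).+1) => //; try lia.
    by move=> e; exfalso; apply: H; exists c.
  have := closure hle; rewrite set_enum.
  have -> : X :|: G [set j] = S :|: G (j |: TT).
    by apply/setP => d; rewrite !inE; case: (d \in S); case: (g d == j); case: (g d \in TT).
  move/eqnP: tT => tT.
  have := hC (j |: TT); rewrite big_setU1 //= -addnA tT -/X. lia.
have cX : c \notin X.
  apply/negP => cX; move: hc; have -> : c |: X = X.
    by apply/setP => d; rewrite in_setU1; case: eqP => // ->; rewrite cX.
  lia.
have cS : c \notin S by move: cX; rewrite inE negb_or => /andP[].
have cGT : c \notin G TT by move: cX; rewrite inE negb_or => /andP[].
pose y1 l := y l - (l == j).
have ysp : forall l, y l = y1 l + (l == j).
  move=> l; rewrite /y1; case: eqP => [->|_]; [by rewrite subnK | by rewrite subn0 addn0].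
have sumU : forall U : {set 'I_n}, \sum_(l in U) y l = \sum_(l in U) y1 l + (j \in U).
  move=> U; rewrite -sum_indn -big_split /=; apply: eq_bigr => l _; exact: ysp.
have hsum1 : \sum_l y1 l = m.
  move: hsum; rewrite (eq_bigr (fun l => y1 l + (l == j))) => [|l _]; last exact: ysp.
  by rewrite big_split /= sum_eq1 addn1 => -[].
have hS1 : rho (c |: S) = #|c |: S|.
  rewrite cardsU1 cS /=.
  have e1 : (c |: S) :|: X = c |: X.
    by apply/setP => d; rewrite !inE; case: (d == c); case: (d \in S); case: (g d \in TT).
  have e2 : (c |: S) :&: X = S.
    apply/setP => d; rewrite !inE; case: eqP => [->|_] /=; last by case: (d \in S).
    by move: cS cGT; rewrite inE => /negbTE -> /negbTE ->.
  have := rho_sub (c |: S) X; rewrite e1 e2 hc hS.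
  have := rho_inc c S; rewrite hS; lia.
have hC1 : forall U : {set 'I_n}, \sum_(l in U) y1 l + #|c |: S| <= rho ((c |: S) :|: G U).
  move=> U; rewrite cardsU1 cS /=.
  have := hC U; rewrite sumU.
  case jU: (j \in U).
    have -> : (c |: S) :|: G U = S :|: G U.
      apply/setP => d; rewrite !inE; case: eqP => [->|] //=.
      by rewrite (eqP gc) jU orbT.
    simpl; lia.
  have [tUU|ntU] := boolP (tightR U).
    have sUT : U \subset TT by rewrite /TT; apply: (bigcup_sup U); rewrite jU tUU.
    have e1 : (c |: (S :|: G U)) :|: X = c |: X.
      apply/setP => d; rewrite !inE.
      have := subsetP sUT (g d); case: (d == c); case: (d \in S); case: (g d \in U); case: (g d \in TT) => //=.
      by move=> /(_ isT).
    have e2 : (c |: (S :|: G U)) :&: X = S :|: G U.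
      apply/setP => d; rewrite !inE.
      case: eqP => [->|_] /=.
        by move: cS cGT; rewrite !inE => /negbTE -> /negbTE ->; rewrite (eqP gc) jU.
      have := subsetP sUT (g d); case: (d \in S); case: (g d \in U); case: (g d \in TT) => //=.
      by move=> /(_ isT).
    have e3 : (c |: S) :|: G U = c |: (S :|: G U).
      by apply/setP => d; rewrite !inE orbA.
    rewrite e3.
    have := rho_sub (c |: (S :|: G U)) X; rewrite e1 e2 hc.
    move/eqnP: tUU; simpl; lia.
  have := rho_mono (_ : S :|: G U \subset (c |: S) :|: G U).
  move: ntU; rewrite /tightR => ntU.
  have : (\sum_(l in U) y l + #|S| != rho (S :|: G U)) by [].
  rewrite sumU jU /=.
  move=> hne hm; have hm' := hm (setSU _ (subsetUr _ _)).
  move: hne; rewrite addn0; move=> /eqnP hne. lia.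
have [S' [sub' hS' hcnt]] := IH (c |: S) y1 hsum1 hS1 hC1.
exists S'; split => //.
  by apply: subset_trans sub'; apply: subsetUr.
move=> l; rewrite hcnt /cnt big_setU1 //= (eqP gc) (ysp l) eq_sym.
lia.
Qed.

Lemma rado (x : 'I_n -> nat) : (forall U : {set 'I_n}, \sum_(l in U) x l <= rho (G U)) ->
  exists S : {set T}, rho S = #|S| /\ forall l, cnt S l = x l.
Proof.
move=> hx.
have [||S' [_ h1 h2]] := @rado_gen _ set0 x erefl.
- by rewrite rho0 cards0.
- by move=> U; rewrite cards0 addn0 set0U; exact: hx.
by exists S'; split => // l; rewrite h2 /cnt big_set0.
Qed.

Lemma sum_cnt (S : {set T}) (U : {set 'I_n}) : \sum_(l in U) cnt S l = #|S :&: G U|.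
Proof.
rewrite /cnt exchange_big /=.
rewrite (eq_bigr (fun d => nat_of_bool (g d \in U))) => [|d _]; last first.
  by rewrite (eq_bigr (fun l => nat_of_bool (l == g d))) ?sum_indn // => l _; rewrite eq_sym.
rewrite -sum1_card [RHS]big_mkcond [LHS]big_mkcond /=; apply: eq_bigr => d _.
by rewrite in_setI inE; case: (d \in S); case: (g d \in U).
Qed.

Lemma indep_sub (S S' : {set T}) : rho S = #|S| -> S' \subset S -> rho S' = #|S'|.
Proof.
move=> hS sS.
have h1 := union_le_set (S :&: S') (S :\: S').
rewrite setID (setIidPr sS) in h1.
have h2 := cardsID S' S; rewrite (setIidPr sS) in h2.
have h3 := union_le_set set0 S'; rewrite set0U rho0 add0n in h3.
lia.
Qed.

End Rado.
Section Mat.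
Variables (F : fieldType) (r n k : nat) (A : 'M[F]_(k, cellN r n)).
Local Notation N := (cellN r n).

Definition vv (c : 'I_N) : 'rV[F]_k := (col c A)^T.
Definition VS (S : {set 'I_N}) := (\sum_(c in S) <<vv c>>)%MS.
Definition rho (S : {set 'I_N}) := \rank (VS S).
Definition gg (c : 'I_N) : 'I_n := (cell c).2.

Lemma rho0 : rho set0 = 0%N.
Proof. by rewrite /rho /VS big_set0 mxrank0. Qed.

Lemma VS_sub (S S' : {set 'I_N}) : S \subset S' -> (VS S <= VS S')%MS.
Proof.
move=> sS; apply/sumsmx_subP => c cS; apply: (sumsmx_sup c); last exact: submx_refl.
exact: (subsetP sS).
Qed.

Lemma rho_mono (S S' : {set 'I_N}) : S \subset S' -> (rho S <= rho S')%N.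
Proof. by move=> sS; apply: mxrankS; apply: VS_sub. Qed.

Lemma VS_U (S S' : {set 'I_N}) : \rank (VS (S :|: S')) = \rank (VS S + VS S')%MS.
Proof.
apply/eqP; rewrite eqn_leq; apply/andP; split; apply: mxrankS.
  apply/sumsmx_subP => c; rewrite inE => /orP[cS|cS].
    apply: submx_trans (addsmxSl _ _); apply: (sumsmx_sup c) => //; exact: submx_refl.
  apply: submx_trans (addsmxSr _ _); apply: (sumsmx_sup c) => //; exact: submx_refl.
by rewrite addsmx_sub !VS_sub ?subsetUl ?subsetUr.
Qed.

Lemma rho_sub (S S' : {set 'I_N}) : (rho (S :|: S') + rho (S :&: S') <= rho S + rho S')%N.
Proof.
rewrite /rho -[X in (_ <= X)%N](mxrank_sum_cap (VS S) (VS S')) VS_U leq_add2l; apply: mxrankS.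
by rewrite sub_capmx !VS_sub ?subsetIl ?subsetIr.
Qed.

Lemma rho_inc c (S : {set 'I_N}) : (rho (c |: S) <= (rho S).+1)%N.
Proof.
rewrite /rho; have h : (VS (c |: S) <= <<vv c>> + VS S)%MS.
  apply/sumsmx_subP => d; rewrite in_setU1 => /orP[/eqP ->|dS].
    exact: addsmxSl.
  apply: submx_trans (addsmxSr _ _); apply: (sumsmx_sup d) => //; exact: submx_refl.
apply: leq_trans (mxrankS h) _.
apply: leq_trans (mxrank_adds_leqif _ _).1 _.
by rewrite genmxE -[X in (_ <= X)%N]add1n leq_add2r rank_leq_row.
Qed.

Lemma cellK (ij : 'I_r * 'I_n) : cell (cell_idx ij : 'I_N) = ij.
Proof. by rewrite /cell /cell_idx enum_rankK. Qed.

Lemma cell_idxK (c : 'I_N) : cell_idx (cell c) = c.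
Proof. by rewrite /cell /cell_idx enum_valK. Qed.

Lemma rowW (j : 'I_n) (i : 'I_r) : row i (Wspace A j) = vv (cell_idx (i, j)).
Proof. by apply/rowP => a; rewrite !mxE. Qed.

Lemma polyrank_rho (U : {set 'I_n}) : polyrank A U = rho (G gg U).
Proof.
rewrite /polyrank /rho; apply/eqP; rewrite eqn_leq; apply/andP; split; apply: mxrankS.
  apply/sumsmx_subP => j jU; rewrite genmxE; apply/row_subP => i; rewrite rowW.
  apply: (sumsmx_sup (cell_idx (i, j))); last by rewrite genmxE submx_refl.
  by rewrite inE /gg cellK.
apply/sumsmx_subP => c; rewrite inE => gU; apply: (sumsmx_sup (gg c)) => //.
rewrite !genmxE.
have -> : vv c = row (cell c).1 (Wspace A (gg c)) by rewrite rowW /gg -surjective_pairing cell_idxK.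
exact: row_sub.
Qed.

Lemma rho_setT : rho setT = \rank A.
Proof.
rewrite /rho -(mxrank_tr A); apply/eqP; rewrite eqn_leq; apply/andP; split; apply: mxrankS.
  apply/sumsmx_subP => c _; rewrite genmxE /vv tr_col; exact: row_sub.
apply/row_subP => c; rewrite -tr_col; apply: (sumsmx_sup c); first exact: in_setT.
by rewrite genmxE submx_refl.
Qed.

Lemma rank_colsub (f : 'I_k -> 'I_N) : \rank (colsub f A) = rho (f @: setT).
Proof.
rewrite /rho -(mxrank_tr (colsub f A)); apply/eqP; rewrite eqn_leq; apply/andP; split; apply: mxrankS.
  apply/row_subP => a.
  have -> : row a (colsub f A)^T = vv (f a) by apply/rowP => b; rewrite !mxE.
  by apply: (sumsmx_sup (f a)); [apply: imset_f; exact: in_setT | rewrite genmxE submx_refl].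
apply/sumsmx_subP => c /imsetP[a _ ->]; rewrite genmxE.
have -> : vv (f a) = row a (colsub f A)^T by apply/rowP => b; rewrite !mxE.
exact: row_sub.
Qed.

Lemma det_ne0 (f : 'I_k -> 'I_N) : (\det (colsub f A) != 0) = (rho (f @: setT) == k).
Proof. by rewrite -rank_colsub -unitfE -unitmxE -row_free_unit. Qed.

Definition cntf (f : 'I_k -> 'I_N) (j : 'I_n) := #|[set a | gg (f a) == j]|.

Lemma plucker_torus (f : 'I_k -> 'I_N) (t : 'I_n -> F) :
  plucker (torus_act t A) f = plucker A f * \prod_(j < n) t j ^+ cntf f j.
Proof.
rewrite /torus_act /plucker.
have -> : colsub f (A *m diag_mx (\row_c t (cell c).2)) =
          colsub f A *m diag_mx (\row_a t (gg (f a))).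
  by apply/matrixP => i a; rewrite !mul_mx_diag !mxE.
rewrite det_mulmx det_diag; congr (_ * _).
rewrite (eq_bigr (fun a => t (gg (f a)))) => [|a _]; last by rewrite mxE.
rewrite (partition_big (fun a => gg (f a)) xpredT) //=; apply: eq_bigr => j _.
rewrite (eq_bigr (fun _ => t j)) => [|a /eqP <-] //.
by rewrite prodr_const /cntf cardsE.
Qed.

Lemma cntf_cnt (f : 'I_k -> 'I_N) : injective f -> forall j, cntf f j = cnt gg (f @: setT) j.
Proof.
move=> finj j; rewrite /cnt big_imset /=; last by move=> a b _ _; exact: finj.
rewrite /cntf -sum1dep_card big_mkcond [RHS]big_mkcond /=; apply: eq_bigr => a _.
by rewrite in_setT; case: (_ == j).
Qed.

End Mat.
Lemma enum_inc m (S : {set 'I_m}) (i j : 'I_#|S|) : (i < j)%N -> (enum_val i < enum_val j)%N.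
Proof.
have inc : sorted ltn (map val (enum S)).
  rewrite -[enum _](eq_filter (mem_enum _)).
  rewrite -(eq_filter (mem_map val_inj _)) -filter_map.
  by rewrite (sorted_filter ltn_trans) // unlock val_ord_enum iota_ltn_sorted.
move=> hij.
rewrite (enum_val_nth (enum_val i) i) (enum_val_nth (enum_val i) j).
rewrite -!(nth_map (enum_val i) 0%N) ?cardE -?cardE ?ltn_ord //.
by apply: (sorted_ltn_nth ltn_trans 0%N inc) => //; rewrite inE size_map -cardE ltn_ord.
Qed.

Lemma two_pow_inj (R : realType) (a b : nat) : (2 : R[i]) ^+ a = 2 ^+ b -> a = b.
Proof. rewrite -!natrX => /eqP; rewrite eqr_nat eqn_exp2l // => /eqP //. Qed.

Section Final.
Variables (R : realType) (r n k : nat) (A : 'M[R[i]]_(k, cellN r n)).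
Hypothesis hA : \rank A = k.
Local Notation N := (cellN r n).

Lemma pl_inj (f : 'I_k -> 'I_N) : pl_index f -> injective f.
Proof.
move=> hf a b e; apply/eqP; case: (ltngtP a b) => // hab.
- by have := hf _ _ hab; rewrite e ltnn.
- by have := hf _ _ hab; rewrite e ltnn.
- by apply/eqP; apply: val_inj.
Qed.

Lemma rk0 : polyrank A set0 = 0%N.
Proof.
rewrite polyrank_rho; have -> : G (@gg r n) set0 = set0 by apply/setP => c; rewrite !inE.
exact: rho0.
Qed.

Lemma rksub U V : (polyrank A (U :|: V) + polyrank A (U :&: V) <= polyrank A U + polyrank A V)%N.
Proof.
rewrite !polyrank_rho.
have -> : G (@gg r n) (U :|: V) = G (@gg r n) U :|: G (@gg r n) V by apply/setP => c; rewrite !inE.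
have -> : G (@gg r n) (U :&: V) = G (@gg r n) U :&: G (@gg r n) V by apply/setP => c; rewrite !inE.
exact: rho_sub.
Qed.

Lemma cntf_inB (f : 'I_k -> 'I_N) : injective f -> rho A (f @: setT) = k ->
  inB (polyrank A) (\row_j (cntf f j)%:R : 'rV[R]_n).
Proof.
move=> finj hrk.
set S := f @: setT.
have hSk : #|S| = k by rewrite card_imset // cardsT card_ord.
have indep : rho A S = #|S| by rewrite hSk.
split; [|split].
- by move=> j; rewrite mxE ler0n.
- move=> U; change (\sum_(j in U) (\row_j (cntf f j)%:R : 'rV[R]_n) 0 j <= (polyrank A U)%:R).
  rewrite (eq_bigr (fun j => (cnt (@gg r n) S j)%:R)) => [|j _]; last by rewrite mxE cntf_cnt.
  rewrite -natr_sum ler_nat polyrank_rho sum_cnt.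
  rewrite -(indep_sub (rho0 A) (rho_inc A) indep (subsetIl _ _)); apply: rho_mono; exact: subsetIr.
- rewrite (eq_bigr (fun j => (cnt (@gg r n) S j)%:R)) => [|j _]; last by rewrite mxE cntf_cnt.
  rewrite -natr_sum polyrank_rho.
  have -> : G (@gg r n) setT = setT by apply/setP => c; rewrite !inE.
  by rewrite rho_setT hA -card_cnt hSk.
Qed.

End Final.
Theorem theorem7p4 (R : realType) (r n k : nat) :
  (0 < r)%N -> (0 < n)%N -> (0 < k)%N ->
  forall A : 'M[R[i]]_(k, cellN r n), \rank A = k ->
  lattice_iso (toric_polytope R A) (base_polytope R (polyrank A)).
Proof.
move=> _ _ _ A hA.
pose X := fun x : 'rV[R]_n => exists e, orbit_exponents A e /\ x = \row_j (e j)%:R.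
have XB : forall x, X x -> inB (polyrank A) x.
  move=> x [e [[f [hf [c [c0 H]]]] ->]].
  have finj := pl_inj hf.
  have hc : plucker A f = c.
    have := H (fun _ => 1) (fun _ => oner_neq0 _).
    by rewrite plucker_torus !big1 ?mulr1 // => j _; exact: expr1n.
  have he : forall j, e j = cntf f j.
    move=> j; pose t := fun l : 'I_n => if l == j then (2 : R[i]) else 1.
    have t0 : forall l, t l != 0.
      by move=> l; rewrite /t; case: ifP => _; [rewrite pnatr_eq0 | exact: oner_neq0].
    have hp : forall m : 'I_n -> nat, \prod_(l < n) t l ^+ m l = 2 ^+ m j.
      move=> m; rewrite (bigD1 j) //= /t eqxx big1 ?mulr1 // => l /negbTE ->; exact: expr1n.
    have := H t t0; rewrite plucker_torus !hp hc => /(mulfI c0) /two_pow_inj ->; done.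
  have -> : (\row_j (e j)%:R : 'rV[R]_n) = \row_j (cntf f j)%:R.
    by apply/rowP => j; rewrite !mxE he.
  apply: cntf_inB => //.
  by apply/eqP; rewrite -det_ne0; move: c0; rewrite -hc.
have BX : forall x, inB (polyrank A) x -> (forall i, exists m : nat, x 0 i = m%:R) -> X x.
  move=> x hx /fin_all_exists [e he].
  have hxe : x = \row_j (e j)%:R by apply/rowP => j; rewrite mxE he.
  have hU : forall U : {set 'I_n}, (\sum_(l in U) e l <= rho A (G (@gg r n) U))%N.
    move=> U; rewrite -polyrank_rho -(ler_nat R) natr_sum.
    under eq_bigr => l _ do rewrite -he.
    by case: hx => _ [hle _]; exact: hle.
  have [S [hS hcnt]] := rado (rho0 A) (@rho_mono _ _ _ _ A) (rho_sub A) (rho_inc A) hU.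
  have hSk : #|S| = k.
    rewrite (card_cnt (@gg r n)) (eq_bigr _ (fun l _ => hcnt l)).
    case: hx => _ [_ hT].
    move: hT; rewrite (eq_bigr (fun j => (e j)%:R)) => [|j _]; last by rewrite he.
    rewrite -natr_sum => /eqP; rewrite eqr_nat => /eqP ->.
    rewrite polyrank_rho.
    have -> : G (@gg r n) setT = setT by apply/setP => c; rewrite !inE.
    by rewrite rho_setT hA.
  pose f (a : 'I_k) : 'I_(cellN r n) := enum_val (cast_ord (esym hSk) a).
  have finj : injective f by move=> a b /enum_val_inj /cast_ord_inj.
  have hfS : f @: setT = S.
    apply/eqP; rewrite eqEcard; apply/andP; split.
      by apply/subsetP => c /imsetP[a _ ->]; exact: enum_valP.
    by rewrite card_imset // cardsT card_ord hSk.
  exists e; split => //.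
  exists f; split.
    by move=> a b hab; apply: enum_inc.
  exists (plucker A f); split.
    by rewrite /plucker det_ne0 hfS hS hSk.
  move=> t _; rewrite plucker_torus; congr (_ * _); apply: eq_bigr => j _.
  by rewrite cntf_cnt // hfS hcnt.
exists 1%:M, 0; split; first exact: unitmx1.
move=> y; rewrite map_mx1 map_mx0; split.
- move=> hy; exists y; split; last by rewrite mulmx1 addr0.
  exact: (inB_conv (@rk0 R r n k A) (@rksub R r n k A) BX).
- by move=> [x [hx ->]]; rewrite mulmx1 addr0; exact: (conv_inB XB).
Qed.
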